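(* Let $Y$ be a continuous random variable supported on $[0,\infty)$ whose density $f$ satisfies $f(t)\le Ce^{-\lambda t}$ for all $t\ge0$, for some $C,\lambda>0$. For every $I>0$ there are constants $\eta,R>0$, depending only on $C,\lambda,I$, such that $\Re\,\mathbb{E}[e^{-sY}] \le 1-\eta$ for every complex $s$ with $\Re s\ge -R$ and $|\Im s|\ge I$. *)

(* Defs.v *)
From HB Require Import structures.
From mathcomp Require Import all_boot all_order all_algebra.
From mathcomp Require Import complex.
From mathcomp Require Import all_classical all_reals all_analysis.
Set Implicit Arguments. Unset Strict Implicit. Unset Printing Implicit Defensive.
Import Order.TTheory GRing.Theory Num.Theory ComplexField.
Local Open Scope ring_scope.
Local Open Scope classical_set_scope.

Definition cexp {R : realType} (z : R[i]) : R[i] :=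
  ((expR (complex.Re z))%:C * (cos (complex.Im z) +i* sin (complex.Im z)))%C.

(* Expectation E[g(Y)] of a complex-valued function g of a real random
   variable Y whose law has density f w.r.t. Lebesgue measure:
   E[g(Y)] = \int g f  (real and imaginary parts integrated separately). *)
Definition cexpect_density {R : realType} (f : R -> R) (g : R -> R[i]) : R[i] :=
  ((Rintegral lebesgue_measure setT (fun t => complex.Re (g t) * f t))
  +i* (Rintegral lebesgue_measure setT (fun t => complex.Im (g t) * f t)))%C.

Definition is_density_on_nonneg {R : realType} (f : R -> R) : Prop :=
  [/\ measurable_fun setT f,
      (forall t, 0 <= f t),
      (forall t, t < 0 -> f t = 0)
    & (\int[lebesgue_measure]_(t in setT) (f t)%:E = 1)%E].

(* Main.v *)
Require Import Defs.
From HB Require Import structures.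
From mathcomp Require Import all_boot all_order all_algebra.
From mathcomp Require Import complex.
From mathcomp Require Import all_classical all_reals all_analysis.
From mathcomp Require Import ring lra.
Import Order.TTheory GRing.Theory Num.Theory ComplexField.
Local Open Scope ring_scope.

Lemma cos_cover (R : realType) (x th : R) : 0 <= x -> 0 < th <= pi -> cos th < cos x ->
  exists k : nat, (k <= Num.truncn ((x + pi) / (pi *+ 2)))%N /\ `|x - k%:R * (pi *+ 2)| < th.
Proof.
move=> x0 /andP[th0 thpi] hc.
have p2 : 0 < pi *+ 2 :> R by rewrite mulrn_wgt0 // pi_gt0.
set k := Num.truncn _.
exists k; split => //.
have /andP[h1 h2] := Num.Theory.truncn_itv (divr_ge0 (addr_ge0 x0 (pi_ge0 R)) (ltW p2)).
rewrite -/k ler_pdivlMr // in h1.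
rewrite ltr_pdivrMr // in h2.
set y := x - _.
have cy : cos x = cos y.
  by rewrite -[in LHS](subrK (k%:R * (pi *+ 2)) x) -/y mulr_natl periodicn //; exact: cosD2pi.
have hy : `|y| <= pi.
  rewrite ler_norml /y; move: h1 h2; rewrite -natr1 mulrDl mul1r.
  set P := k%:R * _; rewrite mulr2n => h1 h2.
  apply/andP; split; lra.
rewrite cy -(cos_norm y) ltr_cos // in hc.
  by rewrite in_itv /= ?(ltW th0) ?thpi ?normr_ge0 ?hy.
by rewrite in_itv /= ?(ltW th0) ?thpi ?normr_ge0 ?hy.
Qed.

Lemma stepA (R : realType) (C l T th tau t ft : R) (N : nat) :
  0 < l -> 0 < C -> 0 <= T -> 0 < th <= pi -> 0 < tau -> 0 <= t ->
  N = (Num.truncn ((tau * T + pi) / (pi *+ 2))).+1 ->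
  0 <= ft -> ft <= C * expR (- l * t) ->
  cos (tau * t) * ft <= (1 - (1 - cos th)) * ft
    + (1 - cos th) * C * expR (- (l / 2) * T) * expR (- (l / 2) * t)
    + (1 - cos th) * C * \sum_(k < N)
        (\1_([set` `[(k%:R * (pi *+ 2) - th) / tau, (k%:R * (pi *+ 2) + th) / tau]%R]%classic) t : R).
Proof.
move=> l0 C0 T0 /andP[th0 thpi] tau0 t0 eN f0 fC.
have d0 : 0 <= 1 - cos th by rewrite subr_ge0 cos_le1.
set d := 1 - cos th.
have S0 : 0 <= \sum_(k < N)
        (\1_([set` `[(k%:R * (pi *+ 2) - th) / tau, (k%:R * (pi *+ 2) + th) / tau]%R]%classic) t : R).
  by apply: sumr_ge0 => k _; rewrite indicE.
set S := \sum_(k < N) _ in S0 *.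
have P0 : 0 <= d * C * expR (- (l / 2) * T) * expR (- (l / 2) * t).
  by rewrite !mulr_ge0 ?expR_ge0 // ltW.
have c1 := cos_le1 (tau * t).
have cf : cos (tau * t) * ft <= ft by rewrite ler_piMl.
have fC1 : ft <= C.
  apply: (le_trans fC); rewrite ler_piMr ?(ltW C0) //.
  by rewrite -expR0 ler_expR mulNr oppr_le0 mulr_ge0 // ltW.
have SC0 : 0 <= d * C * S by rewrite !mulr_ge0 // ltW.
case: (ltP T t) => tT.
  suff : d * ft <= d * C * expR (- (l / 2) * T) * expR (- (l / 2) * t) by lra.
  rewrite -!mulrA; apply: ler_wpM2l => //.
  apply: (le_trans fC); apply: ler_wpM2l; first exact: ltW.
  rewrite -expRD ler_expR.
  have : l * T <= l * t by rewrite ler_pM2l // ltW.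
  lra.
case: (leP (cos (tau * t)) (cos th)) => hc.
  have : cos (tau * t) * ft <= cos th * ft by rewrite ler_wpM2r.
  rewrite (_ : 1 - d = cos th); last by rewrite /d; ring.
  lra.
have x0 : 0 <= tau * t by rewrite mulr_ge0 // ltW.
have [k [kle kth]] := @cos_cover R (tau * t) th x0 (ltac:(by rewrite th0 thpi)) hc.
have kN : (k < N)%N.
  rewrite eN ltnS (leq_trans kle) //; apply: le_truncn.
  apply: ler_wpM2r; first by rewrite invr_ge0 mulrn_wge0 // pi_ge0.
  by rewrite lerD2r ler_pM2l.
have S1 : 1 <= S.
  rewrite /S (bigD1 (Ordinal kN)) //= indicE mem_set /=.
    rewrite lerDl; apply: sumr_ge0 => i _; rewrite indicE; by [].
  rewrite in_itv /= ler_pdivrMr // ler_pdivlMr //.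
  move: kth; rewrite ltr_norml => /andP[h1 h2]; apply/andP; split; lra.
have : d * ft <= d * C * S.
  rewrite -mulrA; apply: ler_wpM2l => //.
  by rewrite -[ft]mulr1 ler_pM.
lra.
Qed.
Lemma lemX (R : realType) (l r t : R) : 0 < l -> 0 <= r -> r <= l / 4 -> 0 <= t ->
  (expR (r * t) - 1) * expR (- l * t) <= (4 * r / l) * expR (- (l / 2) * t).
Proof.
move=> l0 r0 rl t0.
have k0 : 0 <= 4 * r / l by apply: divr_ge0; [apply: mulr_ge0 => //| exact: ltW].
have e1 : expR (r * t) - 1 <= r * t * expR (r * t).
  have := expR_ge1Dx (- (r * t)).
  move=> h; have := ler_wpM2r (expR_ge0 (r * t)) h.
  rewrite -expRD addNr expR0 mulrDl mul1r mulNr; lra.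
have e2 : r * t <= 4 * r / l * expR (l / 4 * t).
  have := expR_ge1Dx (l / 4 * t) => h.
  have h2 : l / 4 * t <= expR (l / 4 * t) by lra.
  have : 4 * r / l * (l / 4 * t) = r * t.
    by field; rewrite gt_eqF.
  move=> <-; apply: ler_wpM2l => //.
apply: (le_trans (ler_wpM2r (expR_ge0 _) e1)).
apply: (le_trans (ler_wpM2r (expR_ge0 _) (ler_wpM2r (expR_ge0 _) e2))).
rewrite (_ : 4 * r / l * expR (l / 4 * t) * expR (r * t) * expR (- l * t) =
   4 * r / l * expR (l / 4 * t + r * t + - l * t)); last by rewrite !expRD !mulrA.
apply: ler_wpM2l => //; rewrite ler_expR.
have : (l / 4 + r - l) * t <= - (l / 2) * t.
  apply: ler_wpM2r => //; lra.
lra.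
Qed.

Lemma pw (R : realType) (C l T th tau Rr sig b t ft : R) (N : nat) :
  0 < l -> 0 < C -> 0 <= T -> 0 < th <= pi -> 0 <= cos th -> 0 < tau -> 0 <= Rr -> Rr <= l / 4 ->
  - Rr <= sig -> `|b| = tau ->
  N = (Num.truncn ((tau * T + pi) / (pi *+ 2))).+1 ->
  0 <= ft -> (0 <= t -> ft <= C * expR (- l * t)) -> (t < 0 -> ft = 0) ->
  expR (- sig * t) * cos (b * t) * ft <=
    (1 - (1 - cos th)) * ft
    + ((1 - cos th) * C * expR (- (l / 2) * T) + 4 * C * Rr / l) * (2 / l)
         * exponential_pdf (l / 2) t
    + (1 - cos th) * C * \sum_(k < N)
        (\1_([set` `[(k%:R * (pi *+ 2) - th) / tau, (k%:R * (pi *+ 2) + th) / tau]%R]%classic) t : R).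
Proof.
move=> l0 C0 T0 thh cth0 tau0 Rr0 Rrl hs hb eN f0 fC fneg.
have d0 : 0 <= 1 - cos th by rewrite subr_ge0 cos_le1.
set d := 1 - cos th.
have S0 : 0 <= \sum_(k < N)
        (\1_([set` `[(k%:R * (pi *+ 2) - th) / tau, (k%:R * (pi *+ 2) + th) / tau]%R]%classic) t : R).
  by apply: sumr_ge0 => k _; rewrite indicE.
have K0 : 0 <= (d * C * expR (- (l / 2) * T) + 4 * C * Rr / l) * (2 / l).
  apply: mulr_ge0; last by rewrite divr_ge0 // ltW.
  apply: addr_ge0; first by rewrite !mulr_ge0 ?expR_ge0 // ltW.
  by rewrite divr_ge0 ?mulr_ge0 // ltW.
have p0 : 0 <= exponential_pdf (l / 2) t.
  by apply: exponential_pdf_ge0; rewrite divr_ge0 // ltW.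
have SC0 : 0 <= d * C * \sum_(k < N)
        (\1_([set` `[(k%:R * (pi *+ 2) - th) / tau, (k%:R * (pi *+ 2) + th) / tau]%R]%classic) t : R).
  by rewrite !mulr_ge0 // ltW.
case: (ltP t 0) => t0.
  rewrite fneg // !mulr0 add0r; apply: addr_ge0 => //; exact: mulr_ge0.
rewrite exponential_pdfE // (_ : cos (b * t) = cos (tau * t)); last first.
  by rewrite -cos_norm normrM hb (ger0_norm t0).
have A := @stepA R C l T th tau t ft N l0 C0 T0 thh tau0 t0 eN f0 (fC t0).
rewrite -/d in A.
set c := cos (tau * t) in A *.
have P0 : 0 <= d * C * expR (- (l / 2) * T) * expR (- (l / 2) * t).
  by rewrite !mulr_ge0 ?expR_ge0 // ltW.
have e : (d * C * expR (- (l / 2) * T) + 4 * C * Rr / l) * (2 / l) * (l / 2 * expR (- (l / 2) * t))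
   = d * C * expR (- (l / 2) * T) * expR (- (l / 2) * t) + 4 * Rr / l * expR (- (l / 2) * t) * C.
  by field; rewrite gt_eqF.
rewrite e.
have Q0 : 0 <= 4 * Rr / l * expR (- (l / 2) * t) * C.
  apply: mulr_ge0; last exact: ltW.
  apply: mulr_ge0; last exact: expR_ge0.
  by apply: divr_ge0; [apply: mulr_ge0 | exact: ltW].
case: (leP c 0) => c0.
  have : expR (- sig * t) * c * ft <= 0.
    by rewrite -mulrA mulr_ge0_le0 ?expR_ge0 // mulr_le0_ge0.
  have : 0 <= (1 - d) * ft by rewrite mulr_ge0 // /d opprB addrC subrK.
  lra.
have eR : expR (- sig * t) <= expR (Rr * t).
  by rewrite ler_expR ler_wpM2r // lerNl.
have h1 : expR (- sig * t) * c * ft <= expR (Rr * t) * c * ft.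
  by rewrite -!mulrA ler_wpM2r // mulr_ge0 // ltW.
have h2 : (expR (Rr * t) - 1) * (c * ft) <= (expR (Rr * t) - 1) * expR (- l * t) * C.
  have er : 0 <= expR (Rr * t) - 1.
    by rewrite subr_ge0 -expR0 ler_expR mulr_ge0.
  rewrite -mulrA ler_wpM2l // (mulrC _ C).
  apply: (le_trans _ (fC t0)); rewrite -[ft]mul1r mulrA ler_wpM2r // mulr1.
  exact: cos_le1.
have h3 := @lemX R l Rr t l0 Rr0 Rrl t0.
have h4 : (expR (Rr * t) - 1) * expR (- l * t) * C <= 4 * Rr / l * expR (- (l / 2) * t) * C.
  by rewrite ler_wpM2r // ltW.
have e2 : expR (Rr * t) * c * ft = c * ft + (expR (Rr * t) - 1) * (c * ft) by ring.
lra.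
Qed.
Lemma reE (R : realType) (f : R -> R) (s : R[i]) :
  complex.Re (cexpect_density f (fun t => cexp (- s * t%:C)%C)) =
  Rintegral lebesgue_measure setT (fun t => expR (- complex.Re s * t) * cos (complex.Im s * t) * f t).
Proof.
rewrite /cexpect_density /=.
apply: eq_Rintegral => t _.
case: s => a b /=.
rewrite /cexp /=.
by rewrite !mulr0 !mul0r subr0 add0r subr0 !mulNr cosN.
Qed.

Section intU.
Local Open Scope classical_set_scope.
Local Open Scope ereal_scope.
Lemma intU (R : realType) (f : R -> R) (a b c rate : R) (N : nat) (l r : nat -> R) :
  measurable_fun setT f -> (forall t, (0 <= f t)%R) ->
  \int[lebesgue_measure]_(t in setT) (f t)%:E = 1 ->
  (0 <= a)%R -> (0 <= b)%R -> (0 <= c)%R -> (0 < rate)%R -> (forall k, l k <= r k)%R ->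
  \int[lebesgue_measure]_(t in setT)
     ((a * f t)%:E + (b * exponential_pdf rate t)%:E
       + c%:E * \sum_(k < N) (\1_([set` `[l k, r k]%R]) t)%:E)
  = (a + b + c * \sum_(k < N) (r k - l k))%:E.
Proof.
move=> mf f0 f1 a0 b0 c0 r0 lr.
have mpdf : measurable_fun setT (exponential_pdf rate).
  exact: measurable_exponential_pdf.
have pdf0 t : (0 <= exponential_pdf rate t)%R by apply: exponential_pdf_ge0; exact: ltW.
have mI k : measurable_fun setT (fun t => (\1_([set` `[l k, r k]%R]) t : R)).
  exact: measurable_realfun.measurable_indic.
rewrite ge0_integralD //; last 4 first.
- by move=> t _; rewrite adde_ge0 // lee_fin ?mulr_ge0.
- apply: emeasurable_funD; apply/measurable_realfun.measurable_EFinP; apply: measurable_realfun.measurable_funM => //;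
  exact: measurable_cst.
- move=> t _; rewrite mule_ge0 // ?lee_fin //; apply: sume_ge0 => k _.
  by rewrite lee_fin.
- apply: emeasurable_funM; first exact: measurable_cst.
  by apply: emeasurable_sum => k; apply/measurable_realfun.measurable_EFinP.
rewrite ge0_integralD //; last 4 first.
- by move=> t _; rewrite lee_fin ?mulr_ge0.
- by apply/measurable_realfun.measurable_EFinP; apply: measurable_realfun.measurable_funM => //; exact: measurable_cst.
- by move=> t _; rewrite lee_fin ?mulr_ge0.
- by apply/measurable_realfun.measurable_EFinP; apply: measurable_realfun.measurable_funM => //; exact: measurable_cst.
under eq_integral do rewrite EFinM.
rewrite ge0_integralZl_EFin //; last first.
  by apply/measurable_realfun.measurable_EFinP.
  by move=> t _; rewrite lee_fin.
under [X in _ + X + _]eq_integral do rewrite EFinM.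
rewrite ge0_integralZl_EFin //; last first.
  by apply/measurable_realfun.measurable_EFinP.
  by move=> t _; rewrite lee_fin.
rewrite ge0_integralZl_EFin //; last first.
  by apply: emeasurable_sum => k; apply/measurable_realfun.measurable_EFinP.
  by move=> t _; apply: sume_ge0 => k _; rewrite lee_fin.
rewrite ge0_integral_sum //; last first.
  by move=> k; apply/measurable_realfun.measurable_EFinP.
rewrite f1 integral_exponential_pdf // mule1 mule1.
rewrite (eq_bigr (fun k : 'I_N => (r k - l k)%:E)); last first.
  move=> k _; rewrite integral_indic // setIT.
  have := lebesgue_measure_itv `[l k, r k]%R; rewrite /= => ->.
  rewrite lte_fin; case: (ltP (l k) (r k)) => [_|h]; first by rewrite EFinB.
  have e : l k = r k by apply/eqP; rewrite eq_le lr h.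
  by rewrite e subrr.
by rewrite sumEFin -EFinM -!EFinD.
Qed.
End intU.

Theorem lemma7 (R : realType) (C lambda I : R) :
  0 < C -> 0 < lambda -> 0 < I ->
  exists eta : R, exists Rr : R, 0 < eta /\ 0 < Rr /\
    forall f : R -> R,
      is_density_on_nonneg f ->
      (forall t, 0 <= t -> f t <= C * expR (- lambda * t)) ->
      forall s : R[i],
        - Rr <= complex.Re s -> I <= `|complex.Im s| ->
        complex.Re (cexpect_density f (fun t => cexp (- s * t%:C)%C)) <= 1 - eta.
Proof.
move=> C0 l0 I0.
have pi2 : 2 <= pi :> R by exact: pi_ge2.
pose T := 16 * C / lambda ^+ 2.
have T0 : 0 <= T by rewrite divr_ge0 ?mulr_ge0 ?sqr_ge0 // ltW.
pose A := 4 * C * (T + 3 / I) + 1.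
have A1 : 1 <= A.
  rewrite /A lerDr; apply: mulr_ge0; first by rewrite mulr_ge0 // ltW.
  by rewrite addr_ge0 // divr_ge0 // ltW.
pose th := A^-1.
have th0 : 0 < th by rewrite invr_gt0; lra.
have A0 : 0 < A by lra.
have th1 : th <= 1 by rewrite /th invf_le1.
have thpi : th <= pi by lra.
have cth0 : 0 <= cos th.
  apply: cos_ge0_pihalf; apply/andP; split; lra.
have cth1 : cos th < 1.
  rewrite -cos0 ltr_cos // in_itv /=; apply/andP; split; lra.
pose d := 1 - cos th.
have d0 : 0 < d by rewrite /d subr_gt0.
have d1 : d <= 1 by rewrite /d; lra.
pose Rr := Num.min (lambda / 4) (d * lambda ^+ 2 / (32 * C)).
have Rrl : Rr <= lambda / 4 by rewrite /Rr ge_min lexx.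
have Rrd : Rr <= d * lambda ^+ 2 / (32 * C) by rewrite /Rr ge_min lexx orbT.
have Rr0 : 0 < Rr.
  rewrite /Rr lt_min; apply/andP; split; first lra.
  by rewrite divr_gt0 ?mulr_gt0 ?exprn_gt0.
exists (d / 4), Rr; split; first lra.
split => //.
move=> f [mf f0 fneg f1] fC s hs hI.
rewrite reE.
set sig := complex.Re s in hs *; set b := complex.Im s in hI *.
set tau := `|b| in hI.
have tau0 : 0 < tau by lra.
pose N := (Num.truncn ((tau * T + pi) / (pi *+ 2))).+1.
pose lo (k : nat) := (k%:R * (pi *+ 2) - th) / tau.
pose hi (k : nat) := (k%:R * (pi *+ 2) + th) / tau.
pose K1 := (d * C * expR (- (lambda / 2) * T) + 4 * C * Rr / lambda) * (2 / lambda).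
have K0 : 0 <= K1.
  apply: mulr_ge0; last by rewrite divr_ge0 // ltW.
  apply: addr_ge0; first by rewrite !mulr_ge0 ?expR_ge0 // ltW.
  by rewrite divr_ge0 ?mulr_ge0 // ltW.
pose h := fun t => expR (- sig * t) * cos (b * t) * f t.
pose U := fun t => (1 - d) * f t + K1 * exponential_pdf (lambda / 2) t
   + d * C * \sum_(k < N) (\1_([set` `[lo k, hi k]%R]%classic) t : R).
have hU t : h t <= U t.
  apply: (@pw R C lambda T th tau Rr sig b t (f t) N) => //.
  - by rewrite th0 thpi.
  - exact: ltW.
  - by move=> t0; exact: fC.
  - by move=> t0; exact: fneg.
have U0 t : 0 <= U t.
  rewrite /U; apply: addr_ge0; first apply: addr_ge0.
  - by rewrite mulr_ge0 // /d; lra.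
  - by rewrite mulr_ge0 // exponential_pdf_ge0 // divr_ge0 // ltW.
  - apply: mulr_ge0; first by apply: mulr_ge0; [exact: ltW|exact: ltW].
    by apply: sumr_ge0 => k _; rewrite indicE.
have mh : measurable_fun setT h.
  apply: measurable_realfun.measurable_funM => //.
  apply: measurable_realfun.measurable_funM.
    apply: measurableT_comp; first exact: measurable_realfun.measurable_expR.
    by apply: measurable_realfun.measurable_funM => //; exact: measurable_cst.
  apply: measurableT_comp; first exact: (measurable_realfun.continuous_measurable_fun (@continuous_cos R)).
  by apply: measurable_realfun.measurable_funM => //; exact: measurable_cst.
have Hint : (\int[lebesgue_measure]_(t in setT) (h t)%:E <=
    (1 - d + K1 + d * C * \sum_(k < N) (hi k - lo k))%:E)%E.
  rewrite integralE.
  apply: (@le_trans _ _ (\int[lebesgue_measure]_(t in setT) ((EFin \o h)^\+ t))%E).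
    rewrite -[leRHS]adde0; apply: leeD => //; rewrite oppe_le0.
    by apply: integral_ge0 => t _; exact: funeneg_ge0.
  have lohi k : lo k <= hi k.
    rewrite /lo /hi; apply: ler_wpM2r; [by rewrite invr_ge0 ltW | lra].
  have a0 : 0 <= 1 - d by rewrite /d; lra.
  have c0 : 0 <= d * C by rewrite mulr_ge0 // ltW.
  have r0 : 0 < lambda / 2 by lra.
  have HU := (@intU R f (1 - d) K1 (d * C) (lambda / 2) N lo hi mf f0 f1 a0 K0 c0 r0 lohi).
  rewrite -HU.
  apply: ge0_le_integral => //.
  - by apply: measurable_realfun.measurable_funepos; apply/measurable_realfun.measurable_EFinP.
  - apply: emeasurable_funD.
      apply: emeasurable_funD; apply/measurable_realfun.measurable_EFinP;
      apply: measurable_realfun.measurable_funM => //; try exact: measurable_cst.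
      exact: measurable_exponential_pdf.
    apply: emeasurable_funM; first exact: measurable_cst.
    apply: emeasurable_sum => k; apply/measurable_realfun.measurable_EFinP.
    exact: measurable_realfun.measurable_indic.
  move=> t _.
  rewrite [X in (_ <= X)%E](_ : _ = (U t)%:E); last first.
    by rewrite /= sumEFin -EFinM -!EFinD.
  rewrite funeposE ge_max; apply/andP; split; rewrite lee_fin //.
have Hb : 1 - d + K1 + d * C * \sum_(k < N) (hi k - lo k) <= 1 - d / 4.
  have pi0 : 0 < pi :> R by lra.
  have sumE : \sum_(k < N) (hi k - lo k) = N%:R * (2 * th / tau).
    rewrite (eq_bigr (fun _ => 2 * th / tau)) => [|k _]; last first.
      by rewrite /hi /lo; field; rewrite gt_eqF.
    rewrite sumr_const card_ord.
    by symmetry; apply: mulr_natl.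
  have NR : N%:R <= (tau * T + pi) / (pi *+ 2) + 1.
    rewrite /N -natr1 lerD2r truncn_le; apply: divr_ge0; last by rewrite mulrn_wge0 // ltW.
    by apply: addr_ge0; [apply: mulr_ge0 => //; apply: ltW | apply: ltW].
  have e1 : ((tau * T + pi) / (pi *+ 2) + 1) * (2 * th / tau) = th * (T / pi + 3 / tau).
    move: pi0; set P := (pi : R); clearbody P => P0.
    by field; rewrite !gt_eqF.
  have Tpi : T / pi <= T.
    by rewrite ler_pdivrMr // ler_peMr //; lra.
  have tI : 3 / tau <= 3 / I.
    by apply: ler_wpM2l => //; rewrite lef_pV2 ?posrE.
  have B1 : N%:R * (2 * th / tau) <= th * (T + 3 / I).
    apply: (le_trans (ler_wpM2r _ NR)); first by rewrite divr_ge0 ?mulr_ge0 ?ltW.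
    by rewrite e1; apply: ler_wpM2l; [exact: ltW | exact: lerD].
  have B2 : 4 * C * (th * (T + 3 / I)) <= 1.
    have -> : 4 * C * (th * (T + 3 / I)) = (A - 1) / A by rewrite /th /A; ring.
    by rewrite ler_pdivrMr // mul1r; lra.
  have B3 : d * C * (N%:R * (2 * th / tau)) <= d / 4.
    have : C * (N%:R * (2 * th / tau)) <= 1 / 4.
      apply: (le_trans (ler_wpM2l (ltW C0) B1)); lra.
    move=> hh; rewrite -mulrA; have := ler_wpM2l (ltW d0) hh; lra.
  have eK : K1 = d * (C * expR (- (lambda / 2) * T) * (2 / lambda)) + 8 * C * Rr / lambda ^+ 2.
    by rewrite /K1; field; rewrite gt_eqF.
  have K2 : C * expR (- (lambda / 2) * T) * (2 / lambda) <= 1 / 4.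
    have ex : lambda / 2 * T = 8 * C / lambda by rewrite /T; field; rewrite gt_eqF.
    rewrite mulNr ex expRN.
    have ge := expR_ge1Dx (8 * C / lambda).
    have eg : 0 < expR (8 * C / lambda) by exact: expR_gt0.
    have -> : C * (expR (8 * C / lambda))^-1 * (2 / lambda) =
        (1 / 4) * (8 * C / lambda) / expR (8 * C / lambda).
      by field; rewrite !gt_eqF.
    rewrite ler_pdivrMr // ler_pM2l //; lra.
  have K3 : 8 * C * Rr / lambda ^+ 2 <= d / 4.
    have : 8 * C * (d * lambda ^+ 2 / (32 * C)) / lambda ^+ 2 = d / 4.
      by field; rewrite ?gt_eqF ?exprn_gt0.
    move=> <-; apply: ler_wpM2r; first by rewrite invr_ge0 sqr_ge0.
    apply: ler_wpM2l => //; apply: mulr_ge0 => //; exact: ltW.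
  have K4 : d * (C * expR (- (lambda / 2) * T) * (2 / lambda)) <= d * (1 / 4).
    by rewrite ler_wpM2l // ltW.
  rewrite sumE eK; lra.
have key : (\int[lebesgue_measure]_(t in setT) (h t)%:E <= (1 - d / 4)%:E)%E.
  by apply: (le_trans Hint); rewrite lee_fin.
rewrite /Rintegral.
set X := (\int[_]_(_ in _) _)%E.
have : (X <= (1 - d / 4)%:E)%E by exact: key.
case: X => [r||] /=.
- by rewrite lee_fin.
- by [].
- move=> _; lra.
Qed.
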